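(* For parameters $r,s$, define $$B^{(r,s)}_{n,k}=\sum_{j=0}^n\binom{j}{k}\binom{n+k}{2j}s^jr^{\,n+k-2j}C_j,\qquad C_j=\tfrac1{j+1}\tbinom{2j}{j},$$ and the $(r,s)$-Borel polynomials $B^{(r,s)}_n(y)=\sum_{k=0}^nB^{(r,s)}_{n,k}y^k$. Then: (i) the $B^{(r,s)}_n(y)$ are the moments of the orthogonal polynomials whose coefficient array is the Riordan array $$\left(\frac{1+sxy}{1+(r+2sy)x+s(1+ry+sy^2)x^2},\ \frac{x}{1+(r+2sy)x+s(1+ry+sy^2)x^2}\right),$$ i.e. the first column of the inverse of this array has generating function $\sum_nB^{(r,s)}_n(y)x^n$; (ii) the generating function $B^{(r,s)}(x,y)=\sum_{n,k}B^{(r,s)}_{n,k}x^ny^k$ has the Jacobi continued fraction expansion $$B^{(r,s)}(x,y)=\cfrac{1}{1-(r+sy)x-\cfrac{(s+rsy+s^2y^2)x^2}{1-(r+2sy)x-\cfrac{(s+rsy+s^2y^2)x^2}{1-(r+2sy)x-\cdots}}}.$$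
   Context: A Riordan array $(g(x),f(x))$ is the lower-triangular matrix with $(n,k)$ entry $[x^n]g(x)f(x)^k$; the moments of the associated orthogonal polynomials are the entries of the first column of its inverse matrix. Continued fractions are interpreted as formal power series limits of convergents. Binomial coefficients with lower index out of range vanish. *)

(* Defs.v *)
From HB Require Import structures.
From mathcomp Require Import all_boot all_order all_algebra.
Set Implicit Arguments. Unset Strict Implicit. Unset Printing Implicit Defensive.
Import Order.TTheory GRing.Theory Num.Theory.
Local Open Scope ring_scope.

Section FPS.
Variable R : comRingType.

Definition fps := nat -> R.

Definition fps_of_seq (c : seq R) : fps := fun n => nth 0 c n.

Definition fps1 : fps := fun n => (n == 0%N)%:R.

Definition fps_mul (a b : fps) : fps :=
  fun n => \sum_(i < n.+1) a i * b (n - i)%N.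

Definition fps_pow (a : fps) (k : nat) : fps := iter k (fps_mul a) fps1.

(* Multiplicative inverse of a series whose constant term is 1:
   b_0 = 1, b_n = - \sum_{i=1}^n a_i b_{n-i}.  (Only used on series with
   constant term 1.) *)
Fixpoint fps_inv_seq (a : fps) (n : nat) : seq R :=
  match n with
  | 0 => [:: 1]
  | n'.+1 => let s := fps_inv_seq a n' in
             rcons s (- \sum_(j < n'.+1) a j.+1 * nth 0 s (n' - j)%N)
  end.

Definition fps_inv (a : fps) : fps := fun n => nth 0 (fps_inv_seq a n) n.

Definition fps_div (a b : fps) : fps := fps_mul a (fps_inv b).

Definition riordan (g f : fps) (n k : nat) : R := fps_mul g (fps_pow f k) n.

(* Convergents of the Jacobi continued fraction
   1/(1 - b_0 x - a_1 x^2/(1 - b_1 x - a_2 x^2/(1 - ...))):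
   jfrac_level b a m i = F_i with F_m = 1 and
   F_i = 1 / (1 - b_i x - a_{i+1} x^2 F_{i+1}). *)
Fixpoint jfrac_from (b a : nat -> R) (d i : nat) : fps :=
  match d with
  | 0 => fps1
  | d'.+1 =>
      fps_inv (fun n => (n == 0%N)%:R - (n == 1%N)%:R * b i
                        - fps_mul (fps_of_seq [:: 0; 0; a i.+1])
                                  (jfrac_from b a d' i.+1) n)
  end.

Definition jfrac_conv (b a : nat -> R) (m : nat) : fps := jfrac_from b a m 0.

End FPS.

Definition catalan (j : nat) : nat := 'C(j.*2, j) %/ j.+1.

Section Borel.
Variable R : comRingType.
Variables r s : R.

Definition borel_coef (n k : nat) : R :=
  \sum_(j < n.+1) ('C(j, k) * 'C(n + k, j.*2) * catalan j)%:R
                   * s ^+ j * r ^+ (n + k - j.*2).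

Definition borel_poly (y : R) (n : nat) : R :=
  \sum_(k < n.+1) borel_coef n k * y ^+ k.

Definition borel_den (y : R) : fps R :=
  fps_of_seq [:: 1; r + 2%:R * s * y; s * (1 + r * y + s * y ^+ 2)].

Definition borel_g (y : R) : fps R :=
  fps_div (fps_of_seq [:: 1; s * y]) (borel_den y).

Definition borel_f (y : R) : fps R :=
  fps_div (fps_of_seq [:: 0; 1]) (borel_den y).

End Borel.

(* Main.v *)
Require Import Defs.
From HB Require Import structures.
From mathcomp Require Import all_boot all_order all_algebra.
From mathcomp Require Import ring zify.
Set Implicit Arguments. Unset Strict Implicit. Unset Printing Implicit Defensive.
Import GRing.Theory.

Lemma sumn_rev n (F : nat -> nat) :
  \sum_(i < n.+1) F i = \sum_(i < n.+1) F (n - i).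
Proof.
rewrite (reindex_inj rev_ord_inj) /=; apply: eq_bigr => i _.
by rewrite subSS.
Qed.

Lemma cat_mul n : n.+1 * catalan n = 'C(n.*2, n).
Proof.
have h1 := mul_bin_left n.*2 n.
have e : n.*2 - n = n by rewrite -addnn addnK.
rewrite e in h1.
have le : 'C(n.*2, n.+1) <= 'C(n.*2, n).
  have : n.+1 * 'C(n.*2, n.+1) <= n.+1 * 'C(n.*2, n) by rewrite h1 leq_mul2r leqnSn orbT.
  by rewrite leq_mul2l.
have hC : 'C(n.*2, n) = n.+1 * ('C(n.*2, n) - 'C(n.*2, n.+1)).
  by rewrite mulnBr h1 mulSn addnK.
by rewrite /catalan hC mulKn.
Qed.

Lemma cat_rec n : n.+2 * catalan n.+1 = (4 * n + 2) * catalan n.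
Proof.
apply/eqP; rewrite -(eqn_pmul2l (ltn0Sn n)).
rewrite cat_mul mulnCA cat_mul.
have h1 := mul_bin_diag (n.+1).*2 n.
have h2 := mul_bin_diag (n.*2.+1) n.
have h3 : 'C(n.*2.+1, n.+1) = 'C(n.*2.+1, n).
  rewrite -bin_sub; last by rewrite ltnS -addnn leq_addl.
  by congr 'C(_, _); rewrite -addnn subSS addnK.
rewrite doubleS /= in h1.
rewrite /= h3 in h2.
rewrite doubleS -h1.
apply/eqP; apply/eqP; rewrite -(eqn_pmul2l (ltn0Sn n)) mulnCA -h2; apply/eqP.
set c := 'C(_, _); rewrite -addnn; lia.
Qed.

Definition catd n := \sum_(i < n.+1) catalan i * catalan (n - i).

Lemma catd_rec n : n.+3 * catd n.+1 = 2 * (catalan n.+1 + (2 * n + 2) * catd n).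
Proof.
have sym : forall m (G : nat -> nat),
    \sum_(i < m.+1) (G i + G (m - i)) = 2 * \sum_(i < m.+1) G i.
  by move=> m G; rewrite big_split /= -(sumn_rev m G) addnn mul2n.
have A : n.+3 * catd n.+1 = 2 * \sum_(i < n.+2) i.+1 * (catalan i * catalan (n.+1 - i)).
  rewrite -(sym n.+1 (fun i => i.+1 * (catalan i * catalan (n.+1 - i)))).
  rewrite /catd big_distrr /=; apply: eq_bigr => i _.
  rewrite subKn; last exact: leq_ord i.
  have := leq_ord i; rewrite mulnCA [catalan (_ - _) * _]mulnC -mulnDl => le.
  by rewrite mulnCA; congr (_ * _); lia.
rewrite A big_ord_recl /= subn0 mul1n; congr (2 * (_ + _)).
  by rewrite [catalan 0]/catalan bin0 divn1 mul1n.
transitivity (\sum_(i < n.+1) (4 * i + 2) * (catalan i * catalan (n - i))).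
  apply: eq_bigr => i _; rewrite /bump /= add1n subSS mulnA cat_rec mulnA //.
have C : \sum_(i < n.+1) ((4 * i + 2) * (catalan i * catalan (n - i)) +
                          (4 * (n - i) + 2) * (catalan (n - i) * catalan (n - (n - i))))
         = (2 * n + 2) * (2 * catd n).
  rewrite /catd mulnA big_distrr /=.
  apply: eq_bigr => i _; rewrite subKn; last exact: leq_ord i.
  rewrite [catalan (n - i) * _]mulnC -mulnDl; have := leq_ord i => le.
  by congr (_ * _); lia.
rewrite (sym n (fun i => (4 * i + 2) * (catalan i * catalan (n - i)))) in C.
by apply/eqP; rewrite -(@eqn_pmul2l 2) // C mulnCA.
Qed.

Lemma catalan_conv n : catalan n.+1 = \sum_(i < n.+1) catalan i * catalan (n - i).
Proof.
rewrite -/(catd n); elim: n => [|n IH]; first by rewrite /catd big_ord1.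
apply/eqP; rewrite -(eqn_pmul2l (ltn0Sn n.+2)) catd_rec -IH cat_rec; apply/eqP.
lia.
Qed.

Local Open Scope ring_scope.

Section Cong.
Variable R : comRingType.
Implicit Types p q : {poly R}.

Definition cong k p q := exists Q, p - q = 'X^k * Q.

Lemma cong_refl k p : cong k p p.
Proof. by exists 0; rewrite subrr mulr0. Qed.
Lemma cong_sym k p q : cong k p q -> cong k q p.
Proof. by case=> Q h; exists (- Q); rewrite mulrN -h opprB. Qed.
Lemma cong_trans k p q t : cong k p q -> cong k q t -> cong k p t.
Proof. by case=> Q1 h1 [Q2 h2]; exists (Q1 + Q2); rewrite mulrDr -h1 -h2 addrA subrK. Qed.
Lemma congD k p q p' q' : cong k p q -> cong k p' q' -> cong k (p + p') (q + q').
Proof. by case=> Q1 h1 [Q2 h2]; exists (Q1 + Q2); rewrite mulrDr -h1 -h2; ring. Qed.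
Lemma congN k p q : cong k p q -> cong k (- p) (- q).
Proof. by case=> Q1 h1; exists (- Q1); rewrite mulrN -h1; ring. Qed.
Lemma congB k p q p' q' : cong k p q -> cong k p' q' -> cong k (p - p') (q - q').
Proof. by move=> h1 h2; apply: congD => //; apply: congN. Qed.
Lemma congMl k p q t : cong k p q -> cong k (t * p) (t * q).
Proof. by case=> Q1 h1; exists (t * Q1); rewrite mulrCA -h1; ring. Qed.
Lemma congMr k p q t : cong k p q -> cong k (p * t) (q * t).
Proof. by case=> Q1 h1; exists (Q1 * t); rewrite mulrA -h1; ring. Qed.
Lemma congM k p q p' q' : cong k p q -> cong k p' q' -> cong k (p * p') (q * q').
Proof. move=> h1 h2; apply: cong_trans (congMr _ h1) (congMl _ h2). Qed.
Lemma congX k p q n : cong k p q -> cong k (p ^+ n) (q ^+ n).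
Proof. move=> h; elim: n => [|n IH]; first by rewrite !expr0; apply: cong_refl.
by rewrite !exprS; apply: congM. Qed.
Lemma cong_sum k (I : Type) (rs : seq I) (F G : I -> {poly R}) :
  (forall i, cong k (F i) (G i)) -> cong k (\sum_(i <- rs) F i) (\sum_(i <- rs) G i).
Proof.
move=> h; elim: rs => [|i rs IH]; first by rewrite !big_nil; apply: cong_refl.
by rewrite !big_cons; apply: congD.
Qed.
Lemma congZ k p q c : cong k p q -> cong k (c *: p) (c *: q).
Proof. by move=> h; rewrite -!mul_polyC; apply: congMl. Qed.
Lemma cong_le k k' p q : (k <= k')%N -> cong k' p q -> cong k p q.
Proof.
move=> le [Q h]; exists ('X^(k' - k) * Q); rewrite h mulrA -exprD subnKC //.
Qed.
Lemma cong0 p q : cong 0 p q.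
Proof. by exists (p - q); rewrite expr0 mul1r. Qed.
Lemma cong_coef k p q i : cong k p q -> (i < k)%N -> p`_i = q`_i.
Proof.
case=> Q h lt; apply/eqP; rewrite -subr_eq0 -coefB h coefXnM lt //.
Qed.
Lemma coef_cong k p q : (forall i, (i < k)%N -> p`_i = q`_i) -> cong k p q.
Proof.
move=> h; exists (drop_poly k (p - q)).
rewrite -{1}(poly_take_drop k (p - q)).
have -> : take_poly k (p - q) = 0.
  apply/polyP => i; rewrite coef_take_poly coef0; case: ifP => // lt.
  by rewrite coefB h // subrr.
by rewrite add0r mulrC.
Qed.
Lemma cong_eq k p q : p = q -> cong k p q.
Proof. by move=> ->; apply: cong_refl. Qed.
Lemma cong_XM k j p q : cong k p q -> cong (k + j) ('X^j * p) ('X^j * q).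
Proof. by case=> Q h; exists Q; rewrite -mulrBr h mulrA -exprD addnC. Qed.
Lemma cong_XMz j p : cong j ('X^j * p) 0.
Proof. by exists p; rewrite subr0. Qed.

(* uniqueness for contraction equations *)
Lemma cong_contract M D H : cong M D ('X * H * D) -> cong M D 0.
Proof.
move=> h.
suff: forall k, (k <= M)%N -> cong k D 0 by apply.
elim=> [|k IH] lt; first by apply: cong0.
apply: cong_trans (cong_le lt h) _.
have [Q hQ] := IH (ltnW lt).
rewrite subr0 in hQ; rewrite hQ.
exists (H * Q); rewrite subr0 exprS; ring.
Qed.

Lemma cong_cert k p q e : cong k e 0 -> p - q = e -> cong k p q.
Proof. by case=> Q h he; exists Q; rewrite he -h subr0. Qed.

Lemma congBz k p q : cong k p q -> cong k (p - q) 0.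
Proof. by case=> Q h; exists Q; rewrite subr0. Qed.
Lemma congMz k p t : cong k p 0 -> cong k (t * p) 0.
Proof. by move=> h; rewrite -(mulr0 t); apply: congMl. Qed.
Lemma congDz k p q : cong k p 0 -> cong k q 0 -> cong k (p + q) 0.
Proof. by move=> h1 h2; rewrite -(addr0 0); apply: congD. Qed.
Lemma congNz k p : cong k p 0 -> cong k (- p) 0.
Proof. by move=> h1; rewrite -oppr0; apply: congN. Qed.

Lemma inv_cong k p q u v : cong k (p * u) 1 -> cong k (q * v) 1 -> cong k u v -> cong k p q.
Proof.
move=> h1 h2 h3.
have e : p - q = p * (1 - q * v) + (- (q * (1 - p * u))) + p * q * (v - u) by ring.
apply: (cong_cert _ e).
apply: congDz; first apply: congDz.
- by apply: congMz; apply: congBz; apply: cong_sym.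
- by apply: congNz; apply: congMz; apply: congBz; apply: cong_sym.
- by apply: congMz; apply: congBz; apply: cong_sym.
Qed.
End Cong.

Section Tr.
Variable R : comRingType.

Definition tr (N : nat) (f : nat -> R) : {poly R} := \poly_(i < N) f i.

Lemma coef_tr N f i : (tr N f)`_i = if (i < N)%N then f i else 0.
Proof. by rewrite coef_poly. Qed.

Lemma tr_coef N f p i : cong N (tr N f) p -> (i < N)%N -> f i = p`_i.
Proof. by move=> h lt; rewrite -(cong_coef h lt) coef_tr lt. Qed.

Lemma tr_ext N f g : (forall i, (i < N)%N -> f i = g i) -> tr N f = tr N g.
Proof. by move=> h; apply/polyP=> i; rewrite !coef_tr; case: ifP => // /h. Qed.

Lemma tr_mul N (f g : fps R) : cong N (tr N (fps_mul f g)) (tr N f * tr N g).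
Proof.
apply: coef_cong => i lt; rewrite coef_tr lt coefM /fps_mul.
apply: eq_bigr => j _; rewrite !coef_tr (leq_ltn_trans (leq_ord j) lt).
by rewrite (leq_ltn_trans (leq_subr _ _) lt).
Qed.

Lemma tr_one N : cong N (tr N (fps1 R)) 1.
Proof. by apply: coef_cong => i lt; rewrite coef_tr lt coef1 /fps1. Qed.

Lemma tr_pow N (f : fps R) k : cong N (tr N (fps_pow f k)) (tr N f ^+ k).
Proof.
elim: k => [|k IH]; first by rewrite expr0; apply: tr_one.
rewrite exprS /fps_pow iterS; apply: cong_trans (tr_mul _ _ _) _.
by apply: congMl.
Qed.

Lemma tr_seq N c : cong N (tr N (fps_of_seq c)) (Poly c).
Proof. by apply: coef_cong => i lt; rewrite coef_tr lt coef_Poly. Qed.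

Lemma size_inv_seq (u : fps R) n : size (fps_inv_seq u n) = n.+1.
Proof. by elim: n => [|n IH] //=; rewrite size_rcons IH. Qed.

Lemma nth_inv_seq (u : fps R) n i : (i <= n)%N -> nth 0 (fps_inv_seq u n) i = fps_inv u i.
Proof.
elim: n => [|n IH] le; first by rewrite leqn0 in le; rewrite (eqP le).
rewrite leq_eqVlt in le; case/orP: le => [/eqP -> //|lt].
by rewrite /= nth_rcons size_inv_seq lt IH.
Qed.

Lemma fps_inv0 (u : fps R) : fps_inv u 0 = 1.
Proof. by []. Qed.

Lemma fps_invS (u : fps R) n :
  fps_inv u n.+1 = - \sum_(j < n.+1) u j.+1 * fps_inv u (n - j)%N.
Proof.
rewrite {1}/fps_inv /= nth_rcons size_inv_seq ltnn eqxx.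
by congr (- _); apply: eq_bigr => j _; rewrite nth_inv_seq // leq_subr.
Qed.

Lemma tr_inv N (u : fps R) : u 0%N = 1 -> cong N (tr N u * tr N (fps_inv u)) 1.
Proof.
move=> u0; apply: cong_trans (cong_sym (tr_mul _ _ _)) _.
apply: coef_cong => i lt; rewrite coef_tr lt coef1 /fps_mul.
case: i lt => [|n] lt; first by rewrite big_ord1 u0 fps_inv0 mulr1.
rewrite big_ord_recl u0 mul1r fps_invS /=.
rewrite (_ : \sum_(i < n.+1) _ = \sum_(j < n.+1) u j.+1 * fps_inv u (n - j)%N).
  by rewrite addNr.
by apply: eq_bigr => j _; rewrite /bump /= ?add1n ?subSS.
Qed.

End Tr.

Section Main.
Variable R : comRingType.
Variables (r s y : R) (N : nat).

Definition Vp : {poly R} := \poly_(m < N) r ^+ m.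
Definition Ep (q : nat) : {poly R} := \poly_(m < N) (r ^+ m * (binomial (m + q) m)%:R).
Definition Tp : {poly R} := \poly_(j < N) (s ^+ j * (catalan j)%:R).
Definition Wp : {poly R} := 'X * ('X + y%:P) * Vp ^+ 2.
Definition Gp : {poly R} := Tp \Po Wp.

Lemma coef1mrX (p : {poly R}) i :
  ((1 - r%:P * 'X) * p)`_i = p`_i - (if i == 0%N then 0 else r * p`_i.-1).
Proof. by rewrite mulrBl mul1r -mulrA coefB coefCM coefXM; case: (i == 0%N); rewrite ?mulr0. Qed.

Lemma V_inv : cong N ((1 - r%:P * 'X) * Vp) 1.
Proof.
apply: coef_cong => i lt; rewrite coef1mrX coef1 /Vp !coef_poly lt.
case: i lt => [|i] lt /=; first by rewrite subr0.
by rewrite (ltnW lt) -exprS subrr.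
Qed.

Lemma Ep_rec p : cong N ((1 - r%:P * 'X) * Ep p.+1) (Ep p).
Proof.
apply: coef_cong => i lt; rewrite coef1mrX /Ep !coef_poly lt.
case: i lt => [|i] lt /=; first by rewrite !bin0 subr0.
have hb : 'C(i.+1 + p.+1, i.+1) = ('C(i + p.+1, i.+1) + 'C(i + p.+1, i))%N.
  by rewrite addSn binS.
rewrite (ltnW lt) hb addSnnS natrD exprS; ring.
Qed.

Lemma Vpow p : cong N (Vp ^+ p.+1) (Ep p).
Proof.
elim: p => [|p IH].
  apply: cong_eq; apply/polyP => i; rewrite expr1 /Vp /Ep !coef_poly addn0 binn mulr1 //.
rewrite exprS.
apply: (@cong_trans _ _ _ (Vp * Ep p)); first by apply: congMl.
apply: (@cong_trans _ _ _ (Vp * ((1 - r%:P * 'X) * Ep p.+1))).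
  by apply: congMl; apply: cong_sym; apply: Ep_rec.
rewrite mulrA; apply: (@cong_trans _ _ _ (1 * Ep p.+1)); last by rewrite mul1r; apply: cong_refl.
by apply: congMr; rewrite mulrC; apply: V_inv.
Qed.

Lemma T_eq : cong N Tp (1 + s%:P * ('X * Tp ^+ 2)).
Proof.
apply: coef_cong => i lt; rewrite coefD coef1 coefCM coefXM /Tp coef_poly lt.
case: i lt => [|j] lt /=; first by rewrite mulr0 addr0 expr0 mul1r.
rewrite add0r expr2 coefM catalan_conv natr_sum big_distrr big_distrr /=.
apply: eq_bigr => k _; rewrite !coef_poly.
have lek : (k <= j)%N := leq_ord k.
rewrite (leq_ltn_trans lek (ltnW lt)) (leq_ltn_trans (leq_subr k j) (ltnW lt)).
rewrite natrM exprS.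
have -> : s ^+ j = s ^+ k * s ^+ (j - k) by rewrite -exprD subnKC.
ring.
Qed.

Lemma comp_cong (P Q q q' : {poly R}) k :
  q = 'X * q' -> cong k P Q -> cong k (P \Po q) (Q \Po q).
Proof.
move=> hq [M hM]; exists (q' ^+ k * (M \Po q)).
by rewrite -comp_polyB hM comp_polyM comp_Xn_poly {1}hq exprMn mulrA.
Qed.

Lemma comp_big (p q : {poly R}) : (size p <= N)%N ->
  p \Po q = \sum_(i < N) p`_i *: q ^+ i.
Proof.
move=> le; rewrite comp_polyE (big_ord_widen _ (fun i => p`_i *: q ^+ i) le).
rewrite big_mkcond /=; apply: eq_bigr => i _; case: ifP => // /negbT.
by rewrite -leqNgt => /leq_sizeP -> //; rewrite scale0r.
Qed.

Lemma comp1 (q : {poly R}) : 1 \Po q = 1.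
Proof. by rewrite -polyC1 comp_polyC. Qed.

Lemma G_eq : cong N Gp (1 + s%:P * (Wp * Gp ^+ 2)).
Proof.
have h := comp_cong (q' := ('X + y%:P) * Vp ^+ 2) _ T_eq.
have h2 : Wp = 'X * (('X + y%:P) * Vp ^+ 2) by rewrite /Wp mulrA.
move: (h _ h2).
rewrite comp_polyD comp1 !comp_polyM comp_polyC comp_polyX.
by rewrite /Gp expr2.
Qed.

Lemma sum_widen m M (F : nat -> R) : (m <= M)%N ->
  (forall i, (m <= i)%N -> (i < M)%N -> F i = 0) ->
  \sum_(i < m) F i = \sum_(i < M) F i.
Proof.
move=> le h; rewrite (big_ord_widen _ F le) big_mkcond /=.
apply: eq_bigr => i _; case: ifP => // /negbT; rewrite -leqNgt => lei.
by rewrite h.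
Qed.

Definition Bp : {poly R} := \poly_(n < N) borel_poly r s y n.

Definition Fjk (n j k : nat) : R :=
  ('C(j, k) * 'C(n + k, j.*2) * catalan j)%:R * s ^+ j * r ^+ (n + k - j.*2) * y ^+ k.

Lemma coefA (E : {poly R}) j n :
  (('X * ('X + y%:P)) ^+ j * E)`_n =
  \sum_(k < j.+1) ('C(j, k))%:R * y ^+ k * ('X^(j + (j - k)) * E)`_n.
Proof.
rewrite exprMn exprDn mulr_sumr big_distrl coef_sum; apply: eq_bigr => k _.
rewrite -rmorphXn /=.
have -> : 'X^j * ('X^(j - k) * (y ^+ k)%:P *+ 'C(j, k)) * E
   = ('C(j, k)%:R * y ^+ k)%:P * ('X^(j + (j - k)) * E).
  by rewrite rmorphM rmorph_nat /= exprD -mulr_natr; ring.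
by rewrite coefCM.
Qed.

Lemma coefXE m q n : (n < N)%N ->
  ('X^m * Ep q)`_n = if (n < m)%N then 0 else r ^+ (n - m) * ('C(n - m + q, n - m))%:R.
Proof.
move=> lt; rewrite coefXnM; case: ifP => // _.
by rewrite /Ep coef_poly (leq_ltn_trans (leq_subr _ _) lt).
Qed.

Lemma Bp_coef n : (n < N)%N ->
  borel_poly r s y n =
  (\sum_(j < N) Tp`_j *: (('X * ('X + y%:P)) ^+ j * Ep (j.*2)))`_n.
Proof.
move=> lt.
transitivity (\sum_(k < N) \sum_(j < N) Fjk n j k).
  rewrite /borel_poly (@sum_widen n.+1 N (fun k => borel_coef r s n k * y ^+ k)) //; last first.
    move=> k lek _; rewrite /borel_coef big_distrl /= big1 // => j _.
    case: (ltnP j k) => hjk; first by rewrite bin_small // !mul0n !mul0r.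
    rewrite (@bin_small (n + k)) ?muln0 ?mul0n ?mul0r //; lia.
  apply: eq_bigr => k _.
  rewrite /borel_coef big_distrl /= (@sum_widen n.+1 N (fun j => Fjk n j k)) //.
  move=> j lej _; rewrite /Fjk.
  case: (ltnP j k) => hjk; first by rewrite bin_small // !mul0n !mul0r.
  rewrite (@bin_small (n + k)) ?muln0 ?mul0n ?mul0r //; lia.
rewrite exchange_big /= coef_sum; apply: eq_bigr => j _.
rewrite coefZ coefA big_distrr /= /Tp coef_poly ltn_ord.
rewrite (@sum_widen j.+1 N (fun k => s ^+ j * (catalan j)%:R * ('C(j, k)%:R * y ^+ k * ('X^(j + (j - k)) * Ep j.*2)`_n))) //; last first.
  by move=> k lek _; rewrite bin_small // !mul0r mulr0.
apply: eq_bigr => k _; rewrite coefXE // /Fjk.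
case: (ltnP j k) => hjk; first by rewrite bin_small // !mul0n !mul0r mulr0.
case: ifP => hn.
  rewrite (@bin_small (n + k)) ?muln0 ?mul0n ?mul0r ?mulr0 //; lia.
have e1 : (n - (j + (j - k)) = n + k - j.*2)%N by lia.
have e2 : (n + k - j.*2 + j.*2 = n + k)%N by lia.
rewrite e1 e2 bin_sub; last by lia.
rewrite !natrM; ring.
Qed.

Lemma Bp_VG : cong N Bp (Vp * Gp).
Proof.
have e : Vp * Gp = \sum_(j < N) Tp`_j *: (('X * ('X + y%:P)) ^+ j * Vp ^+ (j.*2).+1).
  rewrite /Gp comp_big ?size_poly // mulr_sumr; apply: eq_bigr => j _.
  rewrite -scalerAr; congr (_ *: _).
  by rewrite /Wp exprMn -exprM exprS mul2n -muln2 mulrCA.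
rewrite e; apply: (@cong_trans _ _ _ (\sum_(j < N) Tp`_j *: (('X * ('X + y%:P)) ^+ j * Ep (j.*2)))).
  apply: coef_cong => n lt; rewrite -Bp_coef //.
  by rewrite /Bp coef_poly lt.
apply: cong_sum => j; apply: congZ; apply: congMl; apply: cong_sym; apply: Vpow.
Qed.

Lemma K_eq : cong N ((1 - r%:P * 'X) * Bp) (1 + s%:P * ('X * ('X + y%:P) * Bp ^+ 2)).
Proof.
have h1 : cong N ((1 - r%:P * 'X) * Bp) Gp.
  apply: (@cong_trans _ _ _ ((1 - r%:P * 'X) * (Vp * Gp))); first by apply: congMl; apply: Bp_VG.
  rewrite mulrA -{2}(mul1r Gp); apply: congMr; apply: V_inv.
apply: cong_trans h1 _; apply: cong_trans (G_eq) _.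
apply: congD; first by apply: cong_refl.
apply: congMl.
have -> : Wp * Gp ^+ 2 = 'X * ('X + y%:P) * (Vp * Gp) ^+ 2 by rewrite /Wp; ring.
by apply: congMl; apply: congX; apply: cong_sym; apply: Bp_VG.
Qed.

End Main.

Section PartII.
Variable R : comRingType.
Variables (r s y : R) (N : nat).

Local Notation rP := (r%:P).
Local Notation sP := (s%:P).
Local Notation yP := (y%:P).
Definition aaP : {poly R} := sP + rP * sP * yP + sP ^+ 2 * yP ^+ 2.
Definition Bq := Bp r s y N.
Definition Uq : {poly R} := sP * yP * 'X * Bq.
Definition Iq : {poly R} := \sum_(i < N) Uq ^+ i.
Definition Cq : {poly R} := Bq * Iq.

Lemma congz k (p q : {poly R}) : cong k (p - q) 0 -> cong k p q.
Proof. by case=> Q h; exists Q; rewrite -h subr0. Qed.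

Lemma E_z : cong N ((1 - rP * 'X) * Bq - (1 + sP * ('X * ('X + yP) * Bq ^+ 2))) 0.
Proof. by apply: congBz; apply: K_eq. Qed.

Lemma e2_z : cong N ((1 - Uq) * Iq - 1) 0.
Proof.
have h : (1 - Uq) * Iq = 1 - Uq ^+ N.
  rewrite /Iq -opprB mulNr -subrX1; ring.
rewrite h (_ : 1 - Uq ^+ N - 1 = - (Uq ^+ N)); last by ring.
apply: congNz; rewrite /Uq (_ : sP * yP * 'X * Bq = 'X * (sP * yP * Bq)); last by ring.
by rewrite exprMn; apply: cong_XMz.
Qed.

Lemma T1 : cong N (Bq * (1 - (rP + sP * yP) * 'X - aaP * 'X ^+ 2 * Cq)) 1.
Proof.
apply: congz.
set E := (1 - rP * 'X) * Bq - (1 + sP * ('X * ('X + yP) * Bq ^+ 2)).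
set e2 := (1 - Uq) * Iq - 1.
set T := Bq * _ - 1.
have h : T = E + (Uq * E - aaP * 'X ^+ 2 * Bq ^+ 2 * e2) * Iq - (T - E) * e2.
  by rewrite /T /E /e2 /Cq /Uq /aaP; ring.
have hE := E_z; have he := e2_z; rewrite -/E in hE; rewrite -/e2 in he.
rewrite h; apply: congDz; first apply: congDz => //.
  rewrite mulrC; apply: congMz; apply: congDz; first by apply: congMz.
  by apply: congNz; apply: congMz.
by apply: congNz; apply: congMz.
Qed.

Lemma T2 : cong N (Cq * (1 - (rP + 2%:R * sP * yP) * 'X - aaP * 'X ^+ 2 * Cq)) 1.
Proof.
apply: congz.
set E := (1 - rP * 'X) * Bq - (1 + sP * ('X * ('X + yP) * Bq ^+ 2)).
set e2 := (1 - Uq) * Iq - 1.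
set T := Cq * _ - 1.
have h : T = Iq ^+ 2 * (E + e2 * (Bq * (1 - (rP + 2%:R * sP * yP) * 'X) * (1 - Uq)
              - aaP * 'X ^+ 2 * Bq ^+ 2 * (2%:R + e2))) - T * (e2 * (2%:R + e2)).
  by rewrite /T /E /e2 /Cq /Uq /aaP; ring.
have hE := E_z; have he := e2_z; rewrite -/E in hE; rewrite -/e2 in he.
rewrite h; apply: congDz; last by apply: congNz; apply: congMz; rewrite mulrC; apply: congMz.
apply: congMz; apply: congDz => //.
by rewrite mulrC; apply: congMz.
Qed.

Definition aa : R := s + r * s * y + s ^+ 2 * y ^+ 2.
Definition bf (i : nat) : R := if i == 0%N then r + s * y else r + 2%:R * s * y.
Definition af (i : nat) : R := aa.

Lemma aaPE : aa%:P = aaP.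
Proof. by rewrite /aa /aaP !rmorphD !rmorphM /= !expr2. Qed.

Lemma jf_shift d i : jfrac_from bf af d i.+1 = jfrac_from bf af d 1.
Proof.
elim: d i => [|d IH] i //=.
by rewrite IH (IH 1%N).
Qed.

Definition den (c : R) (F : fps R) : fps R := fun n =>
  (n == 0%N)%:R - (n == 1%N)%:R * c - fps_mul (fps_of_seq [:: 0; 0; aa]) F n.

Lemma PolyX2 : Poly [:: 0; 0; aa] = aa%:P * 'X ^+ 2.
Proof.
apply/polyP => i; rewrite coef_Poly coefCM coefXn.
by case: i => [|[|[|i]]] /=; rewrite ?mulr0 ?mulr1 // nth_nil.
Qed.

Lemma den0 c F : den c F 0%N = 1.
Proof. by rewrite /den /fps_mul big_ord1 /fps_of_seq /= mul0r !subr0 mul0r subr0. Qed.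

Lemma tr_den c F : cong N (tr N (den c F)) (1 - c%:P * 'X - aa%:P * 'X ^+ 2 * tr N F).
Proof.
apply: coef_cong => i lt; rewrite coef_tr lt /den !coefB coef1 coefCM coefX.
rewrite -PolyX2 -(cong_coef (congMr (tr N F) (tr_seq N [:: 0; 0; aa])) lt).
by rewrite -(cong_coef (tr_mul N _ _) lt) coef_tr lt mulrC; congr (_ - _ - _).
Qed.

Lemma jf_step d i : jfrac_from bf af d.+1 i = fps_inv (den (bf i) (jfrac_from bf af d i.+1)).
Proof. by []. Qed.

Lemma bf1P : (bf 1)%:P = rP + 2%:R * sP * yP.
Proof. by rewrite /bf /= !rmorphD !rmorphM /= rmorph_nat. Qed.

Lemma bf0P : (bf 0)%:P = rP + sP * yP.
Proof. by rewrite /bf /= !rmorphD !rmorphM. Qed.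

Lemma den_cong k c F G : (k <= N)%N -> cong (k - 2) (tr N F) G ->
  cong k (tr N (den c F)) (1 - c%:P * 'X - aaP * 'X ^+ 2 * G).
Proof.
move=> le h; apply: cong_trans (cong_le le (tr_den c F)) _.
rewrite aaPE; apply: congB; first by apply: cong_refl.
rewrite -(mulrA aaP) -(mulrA aaP); apply: congMl.
apply: cong_le (cong_XM 2 h); lia.
Qed.

Lemma conv_F d : cong (minn (2 * d) N) (tr N (jfrac_from bf af d 1)) Cq.
Proof.
elim: d => [|d IH]; first by rewrite muln0 min0n; apply: cong0.
rewrite jf_step jf_shift.
set k := minn (2 * d.+1) N.
have le : (k <= N)%N by rewrite geq_minr.
apply: (@inv_cong _ _ _ _ (tr N (den (bf 1) (jfrac_from bf af d 1)))
            (1 - (rP + 2%:R * sP * yP) * 'X - aaP * 'X ^+ 2 * Cq)).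
- by rewrite mulrC; apply: cong_le le (tr_inv N (den0 _ _)).
- by apply: cong_le le (T2).
- rewrite -bf1P; apply: den_cong => //.
  by apply: cong_le IH; rewrite /k; lia.
Qed.

Lemma conv_cong d : (N <= 2 * d + 2)%N -> cong N (tr N (jfrac_conv bf af d.+1)) Bq.
Proof.
move=> hd; rewrite /jfrac_conv jf_step.
apply: (@inv_cong _ _ _ _ (tr N (den (bf 0) (jfrac_from bf af d 1)))
            (1 - (rP + sP * yP) * 'X - aaP * 'X ^+ 2 * Cq)).
- by rewrite mulrC; apply: tr_inv (den0 _ _).
- by apply: T1.
- rewrite -bf0P; apply: den_cong => //.
  by apply: cong_le (conv_F d); lia.
Qed.

End PartII.

Lemma partII (R : comRingType) (r s y : R) n : exists M : nat, forall m : nat, (M <= m)%N ->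
  jfrac_conv (bf r s y) (af r s y) m n = borel_poly r s y n.
Proof.
exists n.+1 => m; case: m => [|d] // le.
have h := conv_cong r s y (N := n.+1) (d := d) (ltac:(lia)).
by rewrite (tr_coef h (ltnSn n)) /Bq /Bp coef_poly ltnSn.
Qed.

Section PartI.
Variable R : comRingType.
Variables (r s y : R) (M : nat).

Local Notation rP := (r%:P).
Local Notation sP := (s%:P).
Local Notation yP := (y%:P).

Definition Ds : fps R := borel_den r s y.
Definition Di : {poly R} := tr M (fps_inv Ds).
Definition Dq : {poly R} := 1 + (rP + 2%:R * sP * yP) * 'X + sP * (1 + rP * yP + sP * yP ^+ 2) * 'X ^+ 2.
Definition wq : {poly R} := 1 + sP * yP * 'X.
Definition Jq : {poly R} := \sum_(i < M) (- (sP * yP * 'X)) ^+ i.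
Definition Phi : {poly R} := 'X * Di.
Definition Pq : {poly R} := Bp r s y M \Po Phi.

Lemma Ds0 : Ds 0%N = 1.
Proof. by []. Qed.

Lemma Poly3 (c0 c1 c2 : R) : Poly [:: c0; c1; c2] = c0%:P + c1%:P * 'X + c2%:P * 'X ^+ 2.
Proof.
apply/polyP => i; rewrite coef_Poly !coefD !coefCM coefC coefX coefXn.
by case: i => [|[|[|i]]] /=; rewrite ?mulr0 ?mulr1 ?addr0 ?add0r // nth_nil.
Qed.

Lemma Poly2 (c0 c1 : R) : Poly [:: c0; c1] = c0%:P + c1%:P * 'X.
Proof.
apply/polyP => i; rewrite coef_Poly !coefD !coefCM coefC coefX.
by case: i => [|[|i]] /=; rewrite ?mulr0 ?mulr1 ?addr0 ?add0r // nth_nil.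
Qed.

Lemma trDs : cong M (tr M Ds) Dq.
Proof.
apply: cong_trans (tr_seq _ _) _; rewrite Poly3; apply: cong_eq.
rewrite /Dq !rmorphD !rmorphM /= !rmorphD !rmorphM /= polyC1; ring.
Qed.

Lemma d1_z : cong M (Di * Dq - 1) 0.
Proof.
apply: congBz; rewrite mulrC; apply: cong_trans (congMr _ (cong_sym trDs)) _.
exact: tr_inv Ds0.
Qed.

Lemma d2_z : cong M (wq * Jq - 1) 0.
Proof.
have h : wq * Jq = 1 - (- (sP * yP * 'X)) ^+ M.
  rewrite /Jq /wq; set x := - (sP * yP * 'X); have e := subrX1 x M.
  have -> : 1 + sP * yP * 'X = - (x - 1) by rewrite /x; ring.
  by rewrite mulNr -e; ring.
rewrite h (_ : 1 - (- (sP * yP * 'X)) ^+ M - 1 = - (- (sP * yP * 'X)) ^+ M); last by ring.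
apply: congNz; rewrite (_ : - (sP * yP * 'X) = 'X * (- (sP * yP))); last by ring.
by rewrite exprMn; apply: cong_XMz.
Qed.

Definition Fq (P : {poly R}) : {poly R} :=
  (1 - rP * Phi) * P - (1 + sP * (Phi * (Phi + yP) * P ^+ 2)).

Lemma FP_z : cong M (Fq Pq) 0.
Proof.
apply: congBz.
move: (comp_cong (q := Phi) (q' := Di) erefl (K_eq r s y M)).
rewrite /Fq /Pq !comp_polyM !comp_polyD comp1 -mulNr -polyCN !comp_polyM comp_polyD !comp_polyC comp_polyX polyCN mulNr expr2; apply.
Qed.

Lemma FP'_z : cong M (Fq (Dq * Jq)) 0.
Proof.
set d1 := Di * Dq - 1; set d2 := wq * Jq - 1.
set F0 := Dq * Jq - rP * 'X * Jq - 1 - sP * 'X ^+ 2 * Jq ^+ 2 - sP * yP * 'X * Dq * Jq ^+ 2.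
have h : Fq (Dq * Jq) =
   d1 * (- rP * 'X * Jq - sP * 'X ^+ 2 * Jq ^+ 2 * (2%:R + d1) - sP * yP * 'X * Jq ^+ 2 * Dq)
   + Jq ^+ 2 * (d2 * ((Dq - rP * 'X) * wq - (sP * 'X ^+ 2 + sP * yP * 'X * Dq) * (2%:R + d2)))
   - F0 * (d2 * (2%:R + d2)).
  rewrite /Fq /Phi /d1 /d2 /F0 /Dq /wq; ring.
have h1 := d1_z; have h2 := d2_z; rewrite -/d1 in h1; rewrite -/d2 in h2.
rewrite h; apply: congDz; first apply: congDz.
- by rewrite mulrC; apply: congMz.
- by apply: congMz; rewrite mulrC; apply: congMz.
- by apply: congNz; apply: congMz; rewrite mulrC; apply: congMz.
Qed.

Lemma P_eq : cong M Pq (Dq * Jq).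
Proof.
apply: congz; apply: (@cong_contract _ _ _ (Di * (rP + sP * (Phi + yP) * (Pq + Dq * Jq)))).
apply: congz.
have h : Pq - Dq * Jq - 'X * (Di * (rP + sP * (Phi + yP) * (Pq + Dq * Jq))) * (Pq - Dq * Jq)
   = Fq Pq + - Fq (Dq * Jq) by rewrite /Fq /Phi; ring.
rewrite h; apply: congDz; first exact: FP_z.
by apply: congNz; apply: FP'_z.
Qed.

Lemma main_poly : cong M (wq * Di * Pq) 1.
Proof.
apply: cong_trans (congMl _ P_eq) _.
rewrite (_ : wq * Di * (Dq * Jq) = (wq * Jq) * (Di * Dq)); last by ring.
rewrite -(mulr1 1); apply: congM; apply: congz.
  exact: d2_z.
exact: d1_z.
Qed.

Lemma coef0X (p : {poly R}) n : (p ^+ n)`_0 = p`_0 ^+ n.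
Proof. by elim: n => [|n IH]; rewrite ?expr0 ?coef1 // !exprS coef0M IH. Qed.


Lemma tr_g : cong M (tr M (borel_g r s y)) (wq * Di).
Proof.
apply: cong_trans (tr_mul _ _ _) _; apply: congMr.
apply: cong_trans (tr_seq _ _) _; rewrite Poly2 polyC1 rmorphM; exact: cong_refl.
Qed.

Lemma tr_f : cong M (tr M (borel_f r s y)) Phi.
Proof.
apply: cong_trans (tr_mul _ _ _) _; apply: congMr.
apply: cong_trans (tr_seq _ _) _; rewrite Poly2 polyC1 mul1r add0r; exact: cong_refl.
Qed.

Lemma entry i j : (i < M)%N ->
  riordan (borel_g r s y) (borel_f r s y) i j = (wq * Di * Phi ^+ j)`_i.
Proof.
move=> lt; rewrite /riordan (tr_coef (tr_mul M _ _) lt).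
apply: cong_coef lt; apply: congM; first exact: tr_g.
apply: cong_trans (tr_pow _ _ _) _; apply: congX; exact: tr_f.
Qed.

Lemma entry_up i j : (i < j)%N -> (wq * Di * Phi ^+ j)`_i = 0.
Proof.
move=> lt; rewrite /Phi exprMn (mulrC ('X ^+ j)) mulrA mulrC coefXnM lt //.
Qed.

Lemma entry_diag j : (0 < M)%N -> (wq * Di * Phi ^+ j)`_j = 1.
Proof.
move=> hM; rewrite /Phi exprMn (mulrC ('X ^+ j)) mulrA mulrC coefXnM ltnn subnn.
rewrite !coef0M coef0X /wq coefD coef1 -mulrA coef0M coefX mulr0 addr0 mul1r.
by rewrite /Di coef_tr hM expr1n mulr1.
Qed.

Lemma col_sum i : (i < M)%N ->
  \sum_(j < M) (wq * Di * Phi ^+ j)`_i * borel_poly r s y j = (i == 0%N)%:R.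
Proof.
move=> lt; rewrite -[(i == 0%N)%:R](coef1 _ i) -(cong_coef (main_poly) lt).
rewrite /Pq (comp_big (N := M)) ?size_poly // mulr_sumr coef_sum; apply: eq_bigr => j _.
by rewrite -scalerAr coefZ /Bp coef_poly ltn_ord mulrC.
Qed.

End PartI.

Unset Implicit Arguments.
Set Strict Implicit.

Theorem mainTheorem10 (R : comUnitRingType) (r s y : R) :
  (forall N : nat,
     let L := \matrix_(i < N.+1, j < N.+1)
                riordan (borel_g r s y) (borel_f r s y) i j in
     L \in unitmx /\
     forall i : 'I_N.+1, invmx L i ord0 = borel_poly r s y i)
  /\
  (forall n : nat, exists M : nat, forall m : nat, (M <= m)%N ->
     jfrac_conv
       (fun i => if i == 0%N then r + s * y else r + 2%:R * s * y)
       (fun _ => s + r * s * y + s ^+ 2 * y ^+ 2) m n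
     = borel_poly r s y n).
Proof.
split; last by move=> n; exact: (partII r s y n).
move=> N L.
have hL : forall i j : 'I_N.+1,
    L i j = (wq s y * Di r s y N.+1 * Phi r s y N.+1 ^+ j)`_i.
  by move=> i j; rewrite /L mxE (entry r s y (M := N.+1)) // ltn_ord.
have unitL : L \in unitmx.
  rewrite unitmxE (det_trig (A := L)).
    rewrite (eq_bigr (fun _ => 1)) ?big1_eq ?unitr1 // => i _.
    by rewrite hL entry_diag.
  apply/forallP => i; apply/forallP => j; apply/implyP => lt.
  by rewrite hL entry_up.
split => // i.
have hv : L *m (\col_(j < N.+1) borel_poly r s y j) = delta_mx ord0 0.
  apply/matrixP => i' k; rewrite !mxE (ord1 k) eqxx andbT.
  rewrite -(col_sum r s y (ltn_ord i')); apply: eq_bigr => j _.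
  by rewrite hL mxE.
have := mulKmx unitL (\col_(j < N.+1) borel_poly r s y j).
rewrite hv -colE => /matrixP /(_ i 0).
by rewrite !mxE.
Qed.
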